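(* Let $X$ be a complete metric space, let $f:X\to\mathbb{R}$ be a continuous function, let $r_0>0$, $k>0$, assume $f$ is strongly slope-regular on $[0<f<r_0]$, and let $\varphi\in\mathcal{K}(0,r_0)$. The following assertions are equivalent: (i) the multivalued mapping $x\mapsto[(\varphi\circ f)(x),+\infty)$ is $k$-metrically regular on $[0<f<r_0]\times(0,\varphi(r_0))$; (ii) for all $r_1,r_2\in(0,r_0)$, $\operatorname{Dist}([f=r_1],[f=r_2])\le k\,|\varphi(r_1)-\varphi(r_2)|$; (iii) for all $x\in[0<f<r_0]$, $|\nabla(\varphi\circ f)|(x)\ge\frac1k$.
   Context: $f$ is strongly slope-regular on a set $S$ if $|\nabla f|(x)=|\nabla(-f)|(x)$ for every $x\in S$, where the strong slope is $|\nabla g|(x)=\limsup_{y\to x}\frac{(g(x)-g(y))^+}{d(x,y)}$, $a^+=\max\{a,0\}$. $\mathcal{K}(0,r_0)$ is the set of $\varphi\in C([0,r_0))\cap C^1(0,r_0)$ with $\varphi(0)=0$ and $\varphi'>0$ on $(0,r_0)$; $\varphi(r_0):=\lim_{r\uparrow r_0}\varphi(r)$. $[f=r]=\{x:f(x)=r\}$, $[0<f<r_0]=\{x:0<f(x)<r_0\}$. $\operatorname{Dist}(S_1,S_2)=\max\{\sup_{x\in S_1}\operatorname{dist}(x,S_2),\sup_{x\in S_2}\operatorname{dist}(x,S_1)\}$ is the Hausdorff distance. A multivalued map $F:X\rightrightarrows Y$ is $k$-metrically regular at $(\bar x,\bar y)\in\operatorname{Graph}F$ if there exist $\varepsilon,\delta>0$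 with $\operatorname{dist}(x,F^{-1}(y))\le k\operatorname{dist}(y,F(x))$ for all $(x,y)\in B(\bar x,\varepsilon)\times B(\bar y,\delta)$; on $V$ if so at every point of $\operatorname{Graph}F\cap V$. *)

(* Defs.v *)
From Stdlib Require Import Reals.
From Coquelicot Require Import Coquelicot.
Open Scope R_scope.

Record MetricSpace := {
  mcarrier :> Type;
  mdist : mcarrier -> mcarrier -> R;
  mdist_eq0 : forall x y, mdist x y = 0 <-> x = y;
  mdist_sym : forall x y, mdist x y = mdist y x;
  mdist_tri : forall x y z, mdist x z <= mdist x y + mdist y z
}.

Arguments mdist {m}.

Definition complete_metric (X : MetricSpace) : Prop :=
  forall u : nat -> X,
    (forall eps, 0 < eps -> exists N, forall m n, (N <= m)%nat -> (N <= n)%nat ->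
        mdist (u m) (u n) < eps) ->
    exists l : X, forall eps, 0 < eps -> exists N, forall n, (N <= n)%nat ->
        mdist (u n) l < eps.

Definition mcontinuous {X : MetricSpace} (f : X -> R) : Prop :=
  forall x eps, 0 < eps -> exists delta, 0 < delta /\
    forall y, mdist x y < delta -> Rabs (f y - f x) < eps.

(* Strong slope |grad g|(x) = limsup_{y -> x} (g x - g y)^+ / d(x,y),
   as an extended real: inf over delta > 0 of the sup over
   0 < d(x,y) < delta of the quotient.  The value 0 is added to every
   sup-set (harmless since the quotients are >= 0); it gives the usual
   convention |grad g|(x) = 0 at isolated points. *)
Definition slope {X : MetricSpace} (g : X -> R) (x : X) : Rbar :=
  Rbar_glb (fun s => exists delta, 0 < delta /\
    s = Rbar_lub (fun q => q = Finite 0 \/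
          exists y : X, 0 < mdist x y /\ mdist x y < delta /\
            q = Finite (Rmax 0 (g x - g y) / mdist x y))).

Definition strongly_slope_regular {X : MetricSpace} (f : X -> R) (S : X -> Prop) : Prop :=
  forall x, S x -> slope f x = slope (fun z => - f z) x.

(* dist(x, S) = inf_{z in S} d(x,z)  (= +oo if S is empty). *)
Definition dist_set {X : MetricSpace} (x : X) (S : X -> Prop) : Rbar :=
  Rbar_glb (fun t => exists z, S z /\ t = Finite (mdist x z)).

(* Hausdorff distance Dist(S1,S2) = max(sup_{S1} dist(.,S2), sup_{S2} dist(.,S1)),
   written as the sup of the union of the two sets of values. *)
Definition hausdorff_dist {X : MetricSpace} (S1 S2 : X -> Prop) : Rbar :=
  Rbar_lub (fun t => (exists x, S1 x /\ t = dist_set x S2) \/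
                     (exists x, S2 x /\ t = dist_set x S1)).

Definition level {X : MetricSpace} (f : X -> R) (r : R) : X -> Prop :=
  fun x => f x = r.
Definition band {X : MetricSpace} (f : X -> R) (r0 : R) : X -> Prop :=
  fun x => 0 < f x /\ f x < r0.

(* phi in K(0,r0): phi in C([0,r0)) /\ C^1(0,r0), phi(0) = 0, phi' > 0 on (0,r0).
   phi is given as a function R -> R; only its values on [0,r0) matter. *)
Definition inK (phi : R -> R) (r0 : R) : Prop :=
  (forall r, 0 <= r < r0 -> forall eps, 0 < eps -> exists delta, 0 < delta /\
      forall s, 0 <= s < r0 -> Rabs (s - r) < delta -> Rabs (phi s - phi r) < eps)
  /\ (forall r, 0 < r < r0 ->
        ex_derive phi r /\ continuous (Derive phi) r /\ 0 < Derive phi r)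
  /\ phi 0 = 0.

Definition dist_halfline (y a : R) : R := Rmax 0 (a - y).

(* k-metric regularity of  F : [0<f<r0] ==> R,  x |-> [phi(f x), +oo),
   on V = [0<f<r0] x (0, L), L = phi(r0) in Rbar:
   at every (xb, yb) in Graph F with xb in [0<f<r0], 0 < yb < L, there are
   eps, delta > 0 such that dist(x, F^-1(y)) <= k dist(y, F(x)) for
   x in B(xb,eps) (in the domain of F) and y in B(yb,delta). *)
Definition metric_regular_level (X : MetricSpace) (f : X -> R) (phi : R -> R)
    (r0 : R) (L : Rbar) (k : R) : Prop :=
  forall (xb : X) (yb : R), band f r0 xb -> 0 < yb -> Rbar_lt (Finite yb) L ->
    phi (f xb) <= yb ->
    exists eps, 0 < eps /\ exists delta, 0 < delta /\
      forall (x : X) (y : R), band f r0 x -> mdist x xb < eps -> Rabs (y - yb) < delta ->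
        Rbar_le (dist_set x (fun z => band f r0 z /\ phi (f z) <= y))
                (Finite (k * dist_halfline y (phi (f x)))).

(* Main.v *)
Require Import Defs.
From Stdlib Require Import Reals Lra Lia Classical IndefiniteDescription.
From Coquelicot Require Import Coquelicot.
Open Scope R_scope.

Lemma glb_lb (E : Rbar -> Prop) x : E x -> Rbar_le (Rbar_glb E) x.
Proof. intros H. unfold Rbar_glb. destruct (Rbar_ex_glb E) as [l [H1 H2]]; simpl. now apply H1. Qed.

Lemma glb_ge (E : Rbar -> Prop) l : (forall x, E x -> Rbar_le l x) -> Rbar_le l (Rbar_glb E).
Proof. intros H. unfold Rbar_glb. destruct (Rbar_ex_glb E) as [m [H1 H2]]; simpl. now apply H2. Qed.

Lemma lub_ub (E : Rbar -> Prop) x : E x -> Rbar_le x (Rbar_lub E).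
Proof. intros H. unfold Rbar_lub. destruct (Rbar_ex_lub E) as [l [H1 H2]]; simpl. now apply H1. Qed.

Lemma lub_le (E : Rbar -> Prop) l : (forall x, E x -> Rbar_le x l) -> Rbar_le (Rbar_lub E) l.
Proof. intros H. unfold Rbar_lub. destruct (Rbar_ex_lub E) as [m [H1 H2]]; simpl. now apply H2. Qed.

Lemma rbar_le_eps (v : Rbar) (M : R) :
  (forall eps, 0 < eps -> Rbar_le v (Finite (M + eps))) -> Rbar_le v (Finite M).
Proof.
  intros H. destruct v as [v| |]; simpl; auto.
  - destruct (Rle_dec v M) as [h|h]; auto.
    specialize (H ((v - M)/2)). simpl in H. lra.
  - specialize (H 1 Rlt_0_1). simpl in H. auto.
Qed.

Lemma rbar_ge_below (a : R) (s : Rbar) : 0 < a ->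
  (forall b, 0 < b < a -> Rbar_le (Finite b) s) -> Rbar_le (Finite a) s.
Proof.
  intros Ha H. destruct s as [s| |]; simpl; auto.
  - destruct (Rle_dec a s) as [h|h]; auto.
    destruct (Rlt_le_dec 0 s) as [h0|h0].
    + specialize (H ((s + a)/2)). simpl in H. lra.
    + specialize (H (a/2)). simpl in H. lra.
  - specialize (H (a/2)). simpl in H. apply H; lra.
Qed.

Lemma glb_small (E : Rbar -> Prop) (M eps : R) : Rbar_le (Rbar_glb E) (Finite M) -> 0 < eps ->
  exists x, E x /\ Rbar_lt x (Finite (M + eps)).
Proof.
  intros H He. apply NNPP; intros Hn.
  assert (Rbar_le (Finite (M + eps)) (Rbar_glb E)).
  { apply glb_ge. intros x Ex. apply Rbar_not_lt_le. intros Hl. apply Hn. eauto. }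
  pose proof (Rbar_le_trans _ _ _ H0 H). simpl in H1. lra.
Qed.

Section Met.
Context {X : MetricSpace}.

Lemma d0 (x : X) : mdist x x = 0.
Proof. apply (mdist_eq0 X). reflexivity. Qed.

Lemma dpos (x y : X) : 0 <= mdist x y.
Proof. pose proof (mdist_tri X x y x). rewrite d0, (mdist_sym X y x) in H. lra. Qed.

Lemma dist_small (x : X) S M eps : Rbar_le (dist_set x S) (Finite M) -> 0 < eps ->
  exists z, S z /\ mdist x z < M + eps.
Proof.
  intros H He. destruct (glb_small _ _ _ H He) as [t [[z [Sz ->]] Ht]]. simpl in Ht. eauto.
Qed.

Lemma dist_le_pt (x : X) (S : X -> Prop) z : S z -> Rbar_le (dist_set x S) (Finite (mdist x z)).
Proof. intros Sz. apply glb_lb. eauto. Qed.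

Lemma dist_le_eps (x : X) (S : X -> Prop) M :
  (forall eps, 0 < eps -> exists z, S z /\ mdist x z <= M + eps) -> Rbar_le (dist_set x S) (Finite M).
Proof.
  intros H. apply rbar_le_eps. intros eps He. destruct (H eps He) as [z [Sz Hz]].
  eapply Rbar_le_trans. apply (dist_le_pt x S z Sz). simpl. exact Hz.
Qed.

Lemma dist_mono (x : X) (S1 S2 : X -> Prop) : (forall z, S1 z -> S2 z) ->
  Rbar_le (dist_set x S2) (dist_set x S1).
Proof.
  intros H. apply Rbar_glb_subset. intros t [z [Sz ->]]. eauto.
Qed.

Definition descends (g : X -> R) (x : X) (b delta : R) :=
  exists y, 0 < mdist x y /\ mdist x y < delta /\ b * mdist x y < g x - g y.

Lemma slope_ge_intro (g : X -> R) x a : 0 < a ->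
  (forall delta b, 0 < delta -> 0 < b < a -> descends g x b delta) ->
  Rbar_le (Finite a) (slope g x).
Proof.
  intros Ha H. unfold slope. apply glb_ge. intros s [delta [Hd ->]].
  apply rbar_ge_below; auto. intros b Hb.
  destruct (H delta b Hd Hb) as [y [Hy1 [Hy2 Hy3]]].
  eapply Rbar_le_trans; [|apply lub_ub; right; exists y; split; [exact Hy1|split;[exact Hy2|reflexivity]]].
  simpl. rewrite Rmax_right by nra.
  apply Rmult_le_reg_r with (mdist x y); [lra|]. unfold Rdiv. rewrite Rmult_assoc, Rinv_l; lra.
Qed.

Lemma slope_ge_elim (g : X -> R) x a : 0 < a -> Rbar_le (Finite a) (slope g x) ->
  forall delta b, 0 < delta -> 0 < b < a -> descends g x b delta.
Proof.
  intros Ha H delta b Hd Hb. apply NNPP; intros Hn.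
  assert (Rbar_le (slope g x) (Finite b)).
  { unfold slope. eapply Rbar_le_trans. apply glb_lb. exists delta. split; [exact Hd|reflexivity].
    apply lub_le. intros q [->|[y [Hy1 [Hy2 ->]]]]; simpl; [lra|].
    assert (Hq : g x - g y <= b * mdist x y).
    { apply Rnot_lt_le. intros Hl. apply Hn. exists y. auto. }
    apply Rmult_le_reg_r with (mdist x y); [lra|]. unfold Rdiv. rewrite Rmult_assoc, Rinv_l by lra.
    rewrite Rmult_1_r. apply Rmax_lub; nra. }
  pose proof (Rbar_le_trans _ _ _ H H0). simpl in H1. lra.
Qed.

End Met.

Lemma arch (eps : R) : 0 < eps -> exists N, forall n, (N <= n)%nat -> / INR (S n) < eps.
Proof.
  intros He. destruct (nfloor_ex (/ eps)) as [N [_ HN]]. { left. apply Rinv_0_lt_compat; lra. }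
  exists N. intros n Hn. rewrite S_INR.
  assert (INR N <= INR n) by (apply le_INR; lia).
  assert (0 < INR n + 1) by (pose proof (pos_INR n); lra).
  rewrite <- (Rinv_inv eps). apply Rinv_lt_contravar.
  - apply Rmult_lt_0_compat; [apply Rinv_0_lt_compat; lra| lra].
  - lra.
Qed.

Section Ek.
Context {X : MetricSpace}.

Lemma mcont_opp (g : X -> R) : mcontinuous g -> mcontinuous (fun v => - g v).
Proof.
  intros H x eps He. destruct (H x eps He) as [d [Hd Hy]]. exists d; split; auto.
  intros y Hxy. specialize (Hy y Hxy). rewrite <- Rabs_Ropp. replace (- (- g y - - g x)) with (g y - g x) by ring. auto.
Qed.

Definition conv (u : nat -> X) (z : X) :=
  forall eps, 0 < eps -> exists N, forall n, (N <= n)%nat -> mdist (u n) z < eps.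

Lemma limit_le (g : X -> R) (b : R) (a : X) (C : R) (u : nat -> X) (z : X) (N : nat) :
  mcontinuous g -> 0 <= b -> conv u z ->
  (forall n, (N <= n)%nat -> g (u n) + b * mdist a (u n) <= C) ->
  g z + b * mdist a z <= C.
Proof.
  intros Hg Hb Hu H. apply Rnot_lt_le. intros Hl.
  set (eps := (g z + b * mdist a z - C) / 2).
  assert (He : 0 < eps) by (unfold eps; lra).
  destruct (Hg z eps He) as [d1 [Hd1 Hc]].
  assert (Hm : 0 < Rmin d1 (eps / (b + 1))).
  { apply Rmin_glb_lt; auto. apply Rdiv_lt_0_compat; lra. }
  destruct (Hu _ Hm) as [N1 HN1].
  specialize (HN1 (Nat.max N N1) ltac:(lia)). specialize (H (Nat.max N N1) ltac:(lia)).
  set (v := u (Nat.max N N1)) in *.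
  assert (h1 : mdist v z < d1) by (eapply Rlt_le_trans; [exact HN1| apply Rmin_l]).
  assert (h2 : mdist v z < eps / (b + 1)) by (eapply Rlt_le_trans; [exact HN1| apply Rmin_r]).
  rewrite (mdist_sym X v z) in h1. specialize (Hc v h1).
  pose proof (mdist_tri X a v z).
  assert (b * mdist v z <= eps).
  { assert (b * mdist v z <= (b+1) * (eps / (b+1))).
    { pose proof (dpos v z). nra. }
    replace ((b+1) * (eps / (b+1))) with eps in H1 by (field; lra). lra. }
  apply Rabs_lt_between in Hc. unfold eps in *. nra.
Qed.

Variable Hcomp : complete_metric X.

Lemma ekeland_level (g : X -> R) (c b : R) (x0 : X) :
  mcontinuous g -> 0 < b -> c <= g x0 ->
  (forall z, c < g z -> g z <= g x0 -> forall delta, 0 < delta ->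
     exists y, 0 < mdist z y /\ mdist z y < delta /\ b * mdist z y < g z - g y) ->
  exists z, g z = c /\ b * mdist x0 z <= g x0 - c.
Proof.
  intros Hg Hb Hx0 Hd.
  set (Ss := fun y => c <= g y).
  set (T := fun y w => Ss w /\ g w + b * mdist y w <= g y).
  set (e := fun n : nat => / INR (S n)).
  assert (He : forall n, 0 < e n).
  { intros n. unfold e. apply Rinv_0_lt_compat. apply lt_0_INR. lia. }
  assert (Trefl : forall y, Ss y -> T y y).
  { intros y Sy. split; auto. rewrite d0. lra. }
  assert (Ttrans : forall y w v, T y w -> T w v -> T y v).
  { intros y w v [_ H1] [Sv H2]. split; auto. pose proof (mdist_tri X y w v). nra. }
  assert (Hex : forall y n, exists w, Ss y -> (T y w /\ forall v, T y v -> g w <= g v + e n)).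
  { intros y n. destruct (classic (Ss y)) as [Sy|nSy]; [|exists y; tauto].
    apply NNPP; intros Hn.
    assert (Hall : forall w, T y w -> exists v, T y v /\ g v + e n < g w).
    { intros w Tw. apply NNPP; intros Hn2. apply Hn. exists w. intros _. split; auto.
      intros v Tv. apply Rnot_lt_le. intros Hl. apply Hn2. exists v. split; auto. }
    assert (Hind : forall N : nat, exists w, T y w /\ g w <= g y - INR N * e n).
    { induction N as [|N IH].
      - exists y. split; auto. simpl. lra.
      - destruct IH as [w [Tw Hw]]. destruct (Hall w Tw) as [v [Tv Hv]].
        exists v. split; auto. rewrite S_INR. lra. }
    destruct (nfloor_ex ((g y - c) / e n)) as [N [_ HN]].
    { apply Rdiv_le_0_compat; [unfold Ss in Sy; lra| apply He]. }
    destruct (Hind (S N)) as [w [[Sw _] Hw]]. unfold Ss in Sw. rewrite S_INR in Hw.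
    pose proof (He n).
    assert ((g y - c) < (INR N + 1) * e n).
    { apply (Rmult_lt_compat_r (e n)) in HN; auto.
      replace ((g y - c) / e n * e n) with (g y - c) in HN by (field; lra). lra. }
    lra. }
  assert (nxt : forall y n, {w | Ss y -> (T y w /\ forall v, T y v -> g w <= g v + e n)}).
  { intros y n. apply constructive_indefinite_description. apply Hex. }
  set (u := fix u (n : nat) : X := match n with O => x0 | S m => proj1_sig (nxt (u m) m) end).
  assert (HuS : forall n, u (S n) = proj1_sig (nxt (u n) n)) by reflexivity.
  assert (Su : forall n, Ss (u n) /\ T (u n) (u (S n)) /\ forall v, T (u n) v -> g (u (S n)) <= g v + e n).
  { induction n as [|n IH].
    - simpl. destruct (nxt x0 0%nat) as [w Hw]. simpl. destruct (Hw Hx0) as [h1 h2]. split; auto.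
    - rewrite (HuS (S n)). destruct (nxt (u (S n)) (S n)) as [w Hw]. simpl.
      destruct IH as [_ [[Sn _] _]]. destruct (Hw Sn). split; auto. }
  assert (Tfar : forall n m, T (u n) (u (n + m)%nat)).
  { intros n m. induction m as [|m IH].
    - rewrite Nat.add_0_r. apply Trefl. apply Su.
    - replace (n + S m)%nat with (S (n + m)) by lia. eapply Ttrans; [exact IH| apply Su]. }
  assert (Tle : forall n m, (n <= m)%nat -> T (u n) (u m)).
  { intros n m Hnm. replace m with (n + (m - n))%nat by lia. apply Tfar. }
  assert (Hdiam : forall n v, T (u (S n)) v -> b * mdist (u (S n)) v <= e n).
  { intros n v Tv. assert (T (u n) v) by (eapply Ttrans; [apply Su| exact Tv]).
    destruct (Su n) as [_ [_ Hm]]. specialize (Hm v H). destruct Tv. lra. }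
  assert (Hcau : forall eps, 0 < eps -> exists N, forall m n, (N <= m)%nat -> (N <= n)%nat ->
        mdist (u m) (u n) < eps).
  { intros eps Heps. destruct (arch (eps * b / 2)) as [N HN].
    { apply Rmult_lt_0_compat; [nra|lra]. }
    exists (S N). intros m n Hm Hn.
    pose proof (Hdiam N (u m) (Tle _ _ Hm)). pose proof (Hdiam N (u n) (Tle _ _ Hn)).
    specialize (HN N (le_n N)). fold (e N) in HN.
    pose proof (mdist_tri X (u m) (u (S N)) (u n)). rewrite (mdist_sym X (u m) (u (S N))) in H1.
    assert (b * mdist (u m) (u n) < b * eps) by nra.
    apply Rmult_lt_reg_l with b; auto. }
  destruct (Hcomp u Hcau) as [z Hz].
  assert (Hconv : conv u z) by exact Hz.
  assert (Sz : Ss z).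
  { unfold Ss. assert (- g z + 0 * mdist x0 z <= - c).
    { apply (limit_le (fun v => - g v) 0 x0 (- c) u z 0); auto using mcont_opp; try lra.
      intros n _. destruct (Su n) as [Sn _]. unfold Ss in Sn. lra. }
    lra. }
  assert (Tuz : forall n, T (u n) z).
  { intros n. split; auto. apply (limit_le g b (u n) (g (u n)) u z n); auto; try lra.
    intros m Hm. destruct (Tle n m Hm). lra. }
  assert (Hek : forall w, T z w -> w = z).
  { intros w Tw. apply (mdist_eq0 X). apply Rle_antisym; [|apply dpos].
    apply Rnot_lt_le. intros Hl.
    destruct (arch (mdist w z * b / 2)) as [N1 HN1]. { apply Rmult_lt_0_compat; [nra|lra]. }
    destruct (Hconv (mdist w z / 2)) as [N2 HN2]. { lra. }
    set (n := Nat.max N1 N2).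
    assert (T (u (S n)) w) by (eapply Ttrans; [apply Tuz| exact Tw]).
    pose proof (Hdiam n w H). specialize (HN1 n ltac:(unfold n; lia)). fold (e n) in HN1.
    specialize (HN2 (S n) ltac:(unfold n; lia)).
    pose proof (mdist_tri X w (u (S n)) z). rewrite (mdist_sym X w (u (S n))) in H1.
    assert (b * mdist (u (S n)) w < b * (mdist w z / 2)) by nra.
    assert (mdist (u (S n)) w < mdist w z / 2) by (apply Rmult_lt_reg_l with b; auto).
    lra. }
  exists z. destruct (Tuz 0%nat) as [_ H0]. simpl in H0.
  assert (Hgz : g z = c).
  { destruct Sz as [Hl|He']; [|auto].
    exfalso. destruct (Hg z (g z - c)) as [d1 [Hd1 Hc]]; [lra|].
    destruct (Hd z Hl ltac:(pose proof (dpos x0 z); nra) d1 Hd1) as [y [Hy1 [Hy2 Hy3]]].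
    specialize (Hc y Hy2). apply Rabs_lt_between in Hc.
    assert (T z y) by (split; [unfold Ss; lra| lra]).
    specialize (Hek y H). subst y. rewrite d0 in Hy1. lra. }
  split; auto. rewrite Hgz in H0. lra.
Qed.

End Ek.

Lemma cont_eps (h : R -> R) (r : R) : continuous h r ->
  forall eps, 0 < eps -> exists delta, 0 < delta /\ forall y, Rabs (y - r) < delta -> Rabs (h y - h r) < eps.
Proof.
  intros H eps He. apply filterlim_locally with (eps := mkposreal eps He) in H.
  destruct H as [d Hd]. exists d. split; [apply cond_pos|].
  intros y Hy. apply Hd. exact Hy.
Qed.

Lemma eps_contpt (h : R -> R) (r : R) :
  (forall eps, 0 < eps -> exists delta, 0 < delta /\ forall y, Rabs (y - r) < delta -> Rabs (h y - h r) < eps) ->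
  continuity_pt h r.
Proof.
  intros H. unfold continuity_pt, continue_in, limit1_in, limit_in. simpl. unfold R_dist.
  intros eps He. destruct (H eps He) as [d [Hd Hy]]. exists d. split; auto.
  intros y [_ Hy']. auto.
Qed.

Definition cl (lo hi t : R) := Rmin hi (Rmax lo t).

Lemma cl_lip lo hi s t : lo <= hi -> Rabs (cl lo hi s - cl lo hi t) <= Rabs (s - t).
Proof.
  intros H. unfold cl, Rmin, Rmax.
  repeat (destruct Rle_dec); unfold Rabs; repeat destruct Rcase_abs; lra.
Qed.

Lemma cl_range lo hi t : lo <= hi -> lo <= cl lo hi t <= hi.
Proof. intros H. unfold cl, Rmin, Rmax. repeat destruct Rle_dec; lra. Qed.

Lemma cl_id lo hi t : lo <= t <= hi -> cl lo hi t = t.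
Proof. intros H. unfold cl, Rmin, Rmax. repeat destruct Rle_dec; lra. Qed.

Lemma cl_eq lo hi r t : lo < r < hi -> cl lo hi t = r -> t = r.
Proof. intros H. unfold cl, Rmin, Rmax. repeat destruct Rle_dec; lra. Qed.

Section Phi.
Local Set Default Proof Using "All".
Variables (phi : R -> R) (r0 : R).
Hypothesis (Hr0 : 0 < r0) (HK : inK phi r0).

Lemma phi_cont r : 0 <= r < r0 -> forall eps, 0 < eps -> exists delta, 0 < delta /\
      forall s, 0 <= s < r0 -> Rabs (s - r) < delta -> Rabs (phi s - phi r) < eps.
Proof. destruct HK as [H _]. apply H. Qed.

Lemma phi_mvt s t : 0 < s < t -> t < r0 ->
  exists c, s <= c <= t /\ phi t - phi s = Derive phi c * (t - s).
Proof.
  intros Hs Ht. destruct HK as [_ [HD _]].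
  destruct (MVT_gen phi s t (Derive phi)) as [c [Hc Heq]].
  - intros x Hx. rewrite Rmin_left in Hx by lra. rewrite Rmax_right in Hx by lra.
    apply Derive_correct. apply HD. lra.
  - intros x Hx. rewrite Rmin_left in Hx by lra. rewrite Rmax_right in Hx by lra.
    apply continuity_pt_filterlim. exact (ex_derive_continuous (K:=R_AbsRing) (V:=R_NormedModule) phi x (proj1 (HD x ltac:(lra)))).
  - rewrite Rmin_left in Hc by lra. rewrite Rmax_right in Hc by lra. eauto.
Qed.

Lemma phi_incr_pos s t : 0 < s < t -> t < r0 -> phi s < phi t.
Proof.
  intros Hs Ht. destruct (phi_mvt s t Hs Ht) as [c [Hc Heq]].
  destruct HK as [_ [HD _]]. destruct (HD c ltac:(lra)) as [_ [_ Hp]]. nra.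
Qed.

Lemma phi_incr s t : 0 <= s < t -> t < r0 -> phi s < phi t.
Proof.
  intros Hs Ht. destruct (Rle_lt_or_eq_dec 0 s (proj1 Hs)) as [Hs0|Hs0].
  - apply phi_incr_pos; lra.
  - subst s. apply Rle_lt_trans with (phi (t/2)); [|apply phi_incr_pos; lra].
    apply Rnot_lt_le. intros Hl.
    destruct (phi_cont 0 ltac:(lra) (phi 0 - phi (t/2)) ltac:(lra)) as [d [Hd Hc]].
    set (u := Rmin (d/2) (t/4)).
    assert (0 < u) by (apply Rmin_glb_lt; lra).
    assert (u <= d/2) by apply Rmin_l. assert (u <= t/4) by apply Rmin_r.
    specialize (Hc u ltac:(lra) ltac:(rewrite Rminus_0_r, Rabs_right; lra)).
    pose proof (phi_incr_pos u (t/2) ltac:(lra) ltac:(lra)).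
    apply Rabs_lt_between in Hc. lra.
Qed.

Lemma phi_le s t : 0 <= s <= t -> t < r0 -> phi s <= phi t.
Proof.
  intros Hs Ht. destruct (Rle_lt_or_eq_dec s t (proj2 Hs)) as [h|h].
  - left. apply phi_incr; lra.
  - subst; lra.
Qed.

Lemma phi_lt_inv s t : 0 <= s < r0 -> 0 <= t < r0 -> phi s < phi t -> s < t.
Proof.
  intros Hs Ht H. apply Rnot_le_lt. intros Hl. pose proof (phi_le t s ltac:(lra) ltac:(lra)). lra.
Qed.

Lemma phi_le_inv s t : 0 <= s < r0 -> 0 <= t < r0 -> phi s <= phi t -> s <= t.
Proof.
  intros Hs Ht H. apply Rnot_lt_le. intros Hl. pose proof (phi_incr t s ltac:(lra) ltac:(lra)). lra.
Qed.

Lemma phi_inj s t : 0 <= s < r0 -> 0 <= t < r0 -> phi s = phi t -> s = t.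
Proof.
  intros Hs Ht H. apply Rle_antisym; apply phi_le_inv; lra.
Qed.

Lemma phi_pos r : 0 < r < r0 -> 0 < phi r.
Proof.
  intros H. destruct HK as [_ [_ H0]]. rewrite <- H0. apply phi_incr; lra.
Qed.

Lemma phi_chain r eta : 0 < r < r0 -> 0 < eta -> exists rho, 0 < rho /\ 0 < r - rho /\ r + rho < r0 /\
  forall s t, Rabs (s - r) < rho -> Rabs (t - r) < rho -> t < s ->
    (Derive phi r - eta) * (s - t) <= phi s - phi t <= (Derive phi r + eta) * (s - t).
Proof.
  intros Hr He. destruct HK as [_ [HD _]]. destruct (HD r Hr) as [_ [Hc _]].
  destruct (cont_eps _ _ Hc eta He) as [d [Hd Hy]].
  set (rho := Rmin d (Rmin (r/2) ((r0 - r)/2))).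
  assert (h1 : rho <= d) by apply Rmin_l.
  assert (h2 : rho <= r/2) by (eapply Rle_trans; [apply Rmin_r| apply Rmin_l]).
  assert (h3 : rho <= (r0-r)/2) by (eapply Rle_trans; [apply Rmin_r| apply Rmin_r]).
  assert (h0 : 0 < rho) by (apply Rmin_glb_lt; [lra| apply Rmin_glb_lt; lra]).
  exists rho. split; [lra|split;[lra|split;[lra|]]].
  intros s t Hs Ht Hts. apply Rabs_lt_between in Hs. apply Rabs_lt_between in Ht.
  destruct (phi_mvt t s ltac:(lra) ltac:(lra)) as [c [Hc' Heq]].
  assert (Rabs (c - r) < d) by (apply Rabs_lt_between; lra).
  specialize (Hy c H). apply Rabs_lt_between in Hy. rewrite Heq. split; nra.
Qed.

Lemma phicl_cont lo hi : 0 <= lo <= hi -> hi < r0 ->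
  forall t eps, 0 < eps -> exists delta, 0 < delta /\
    forall t', Rabs (t' - t) < delta -> Rabs (phi (cl lo hi t') - phi (cl lo hi t)) < eps.
Proof.
  intros Hl Hh t eps He. pose proof (cl_range lo hi t ltac:(lra)).
  destruct (phi_cont (cl lo hi t) ltac:(lra) eps He) as [d [Hd Hc]].
  exists d. split; auto. intros t' Ht'. pose proof (cl_range lo hi t' ltac:(lra)).
  apply Hc. lra. eapply Rle_lt_trans; [apply cl_lip; lra| exact Ht'].
Qed.

Lemma phi_ivt a y : 0 < a < r0 -> 0 < y < phi a -> exists r, 0 < r <= a /\ phi r = y.
Proof.
  intros Ha Hy.
  assert (Hc : continuity (fun t => phi (cl 0 a t))).
  { intros t. apply eps_contpt. apply phicl_cont; lra. }
  destruct (IVT_gen _ 0 a y Hc) as [r [Hr Hphi]].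
  - rewrite (cl_id 0 a 0) by lra. rewrite (cl_id 0 a a) by lra.
    destruct HK as [_ [_ H0]]. rewrite H0. rewrite Rmin_left, Rmax_right; lra.
  - rewrite Rmin_left, Rmax_right in Hr by lra. rewrite cl_id in Hphi by lra.
    exists r. split; auto. split; [|lra]. destruct (proj1 Hr) as [h|h]; auto.
    subst r. destruct HK as [_ [_ H0]]. lra.
Qed.

Lemma phi_lt_L L r : filterlim phi (at_left r0) (Rbar_locally L) -> 0 <= r < r0 -> Rbar_lt (Finite (phi r)) L.
Proof.
  intros Hl Hr. set (s := (r + r0)/2).
  assert (Hs : phi r < phi s) by (apply phi_incr; unfold s; lra).
  destruct L as [L| |]; simpl; auto.
  - apply Rnot_le_lt. intros HL.
    assert (He : 0 < phi s - phi r) by lra.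
    apply filterlim_locally with (eps := mkposreal _ He) in Hl.
    destruct Hl as [d Hd].
    set (t := Rmax s (r0 - d/2)).
    assert (s <= t) by apply Rmax_l. assert (r0 - d/2 <= t) by apply Rmax_r.
    assert (t < r0) by (unfold t, Rmax; destruct Rle_dec; unfold s in *; pose proof (cond_pos d); lra).
    assert (ball r0 d t) by (unfold ball; simpl; unfold AbsRing_ball, abs, minus, plus, opp; simpl;
       apply Rabs_lt_between; pose proof (cond_pos d); lra).
    specialize (Hd t H2 H1). unfold ball in Hd; simpl in Hd. unfold AbsRing_ball, abs, minus, plus, opp in Hd; simpl in Hd.
    apply Rabs_lt_between in Hd. simpl in Hd.
    assert (phi s <= phi t) by (apply phi_le; unfold s in *; lra). lra.
    assert (Hm : Rbar_locally m_infty (fun y => y < phi s)) by (exists (phi s); auto).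
    apply Hl in Hm. destruct Hm as [d Hd].
    set (t := Rmax s (r0 - d/2)).
    assert (s <= t) by apply Rmax_l. assert (r0 - d/2 <= t) by apply Rmax_r.
    assert (t < r0) by (unfold t, Rmax; destruct Rle_dec; unfold s in *; pose proof (cond_pos d); lra).
    assert (ball r0 d t) by (unfold ball; simpl; unfold AbsRing_ball, abs, minus, plus, opp; simpl;
       apply Rabs_lt_between; pose proof (cond_pos d); lra).
    specialize (Hd t H2 H1). simpl in Hd.
    assert (phi s <= phi t) by (apply phi_le; unfold s in *; lra). lra.
Qed.

End Phi.

Section Main.
Variables (X : MetricSpace) (f : X -> R) (r0 k : R) (phi : R -> R) (L : Rbar).
Hypotheses (Hcomp : complete_metric X) (Hf : mcontinuous f) (Hr0 : 0 < r0) (Hk : 0 < k)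
  (Hreg : strongly_slope_regular f (band f r0)) (HK : inK phi r0)
  (HL : filterlim phi (at_left r0) (Rbar_locally L)).

Definition cond_iii := forall x, band f r0 x ->
      Rbar_le (Finite (1 / k)) (slope (fun z => phi (f z)) x).

Lemma i_to_iii : metric_regular_level X f phi r0 L k -> cond_iii.
Proof.
  intros Hi x Hx. apply slope_ge_intro. { apply Rdiv_lt_0_compat; lra. }
  intros delta b Hd Hb. destruct Hx as [Hx1 Hx2].
  assert (Hyb : 0 < phi (f x)) by (apply (phi_pos phi r0); auto).
  assert (HyL : Rbar_lt (Finite (phi (f x))) L) by (apply (phi_lt_L phi r0); auto; lra).
  destruct (Hi x (phi (f x)) (conj Hx1 Hx2) Hyb HyL (Rle_refl _)) as [eps [He [dl [Hdl H]]]].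
  set (t := Rmin dl (b * delta) / 2).
  assert (ht1 : Rmin dl (b*delta) <= dl) by apply Rmin_l.
  assert (ht2 : Rmin dl (b*delta) <= b * delta) by apply Rmin_r.
  assert (ht0 : 0 < Rmin dl (b*delta)) by (apply Rmin_glb_lt; nra).
  specialize (H x (phi (f x) - t) (conj Hx1 Hx2) ltac:(rewrite d0; lra)
     ltac:(unfold t; rewrite Rabs_left; lra)).
  unfold dist_halfline in H. replace (phi (f x) - (phi (f x) - t)) with t in H by ring.
  rewrite Rmax_right in H by (unfold t; lra).
  assert (Hbk : b * k < 1).
  { assert (b * k < 1/k * k) by (apply Rmult_lt_compat_r; lra). replace (1/k*k) with 1 in H0 by (field; lra). lra. }
  assert (Hib : b * (/ b) = 1) by (field; lra).
  assert (Hpos : 0 < t * (/ b - k)).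
  { apply Rmult_lt_0_compat; [unfold t; lra|]. assert (/b * (b*k) < /b * 1).
    { apply Rmult_lt_compat_l; auto. apply Rinv_0_lt_compat; lra. }
    replace (/ b * (b * k)) with k in H0 by (field; lra). lra. }
  destruct (dist_small x _ _ _ H Hpos) as [z [[Hz1 Hz2] Hz3]].
  exists z. 
  assert (Hdz : mdist x z < t / b).
  { replace (t / b) with (k * t + t * (/ b - k)) by (field; lra). exact Hz3. }
  assert (Hne : 0 < mdist x z).
  { destruct (dpos x z) as [h|h]; auto. symmetry in h. apply (mdist_eq0 X) in h. subst z. unfold t in Hz2. lra. }
  assert (b * mdist x z < t).
  { apply Rmult_lt_compat_l with (r := b) in Hdz; [|lra]. replace (b * (t / b)) with t in Hdz by (field; lra). lra. }
  split; auto. split; [|lra].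
  apply Rlt_le_trans with (t / b); auto. apply Rmult_le_reg_l with b; [lra|].
  replace (b * (t / b)) with t by (field; lra). unfold t; lra.
Qed.

Lemma fcont_near x eps : 0 < eps -> exists d, 0 < d /\ forall y, mdist x y < d -> f x - eps < f y < f x + eps.
Proof.
  intros He. destruct (Hf x eps He) as [d [Hd H]]. exists d. split; auto.
  intros y Hy. specialize (H y Hy). apply Rabs_lt_between in H. lra.
Qed.

Lemma desc_phi (Hiii : cond_iii) x : band f r0 x -> forall delta b, 0 < delta -> 0 < b < 1 / k ->
  descends (fun z => phi (f z)) x b delta.
Proof.
  intros Hx. apply slope_ge_elim; [apply Rdiv_lt_0_compat; lra| apply Hiii; auto].
Qed.

Lemma asc_phi (Hiii : cond_iii) x : band f r0 x -> forall delta b, 0 < delta -> 0 < b < 1 / k ->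
  descends (fun z => - phi (f z)) x b delta.
Proof.
  intros Hx. destruct Hx as [Hx1 Hx2].
  set (p := Derive phi (f x)).
  assert (Hp : 0 < p) by (destruct HK as [_ [HD _]]; apply HD; lra).
  set (ik := 1 / k). assert (Hik : 0 < ik) by (unfold ik; apply Rdiv_lt_0_compat; lra).
  set (a := ik / p). assert (Ha : 0 < a) by (unfold a; apply Rdiv_lt_0_compat; lra).
  assert (Hap : a * p = ik) by (unfold a; field; lra).
  assert (HA : Rbar_le (Finite a) (slope f x)).
  { apply slope_ge_intro; auto. intros delta c Hd Hc.
    assert (Hcp : c * p < ik) by nra.
    assert (Hcp0 : 0 < c * p) by nra.
    set (b' := (c * p + ik)/2).
    assert (Hb'0 : 0 < b') by (unfold b'; lra).
    set (eta := (ik - c * p) / (2 * c)).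
    assert (Heta : 0 < eta) by (unfold eta; apply Rdiv_lt_0_compat; lra).
    assert (Hb' : c * (p + eta) = b') by (unfold eta, b'; field; lra).
    destruct (phi_chain phi r0 Hr0 HK (f x) eta ltac:(lra) Heta) as [rho [Hrho [Hr1 [Hr2 Hch]]]]. fold p in Hch.
    destruct (fcont_near x rho Hrho) as [df [Hdf Hnear]].
    destruct (desc_phi Hiii x (conj Hx1 Hx2) (Rmin delta df) b' ltac:(apply Rmin_glb_lt; lra)
      ltac:(assert (0 < c*p) by nra; unfold b', ik in *; lra)) as [y [Hy1 [Hy2 Hy3]]].
    assert (Hm1 : Rmin delta df <= delta) by apply Rmin_l. assert (Hm2 : Rmin delta df <= df) by apply Rmin_r.
    specialize (Hnear y ltac:(lra)).
    assert (Hlt : f y < f x).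
    { apply Rnot_le_lt. intros Hle. pose proof (phi_le phi r0 Hr0 HK (f x) (f y) ltac:(lra) ltac:(lra)).
      pose proof (Rmult_lt_0_compat b' (mdist x y) Hb'0 Hy1). lra. }
    destruct (Hch (f x) (f y) ltac:(rewrite Rminus_diag, Rabs_R0; lra)
       ltac:(apply Rabs_lt_between; lra) Hlt) as [_ Hup].
    exists y. split; auto. split; [lra|].
    assert ((p + eta) * (c * mdist x y) < (p + eta) * (f x - f y)).
    { cbv beta in Hy3. replace ((p+eta)*(c*mdist x y)) with (b' * mdist x y) by (rewrite <- Hb'; ring). lra. }
    apply Rmult_lt_reg_l in H; lra. }
  assert (HB : Rbar_le (Finite a) (slope (fun z => - f z) x)) by (rewrite <- Hreg; auto; split; auto).
  intros delta b Hd Hb.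
  assert (Hbik : b < ik) by (unfold ik in *; lra).
  set (c := (b / p + a) / 2).
  assert (Hbp : b / p * p = b) by (field; lra).
  assert (Hc0 : 0 < c) by (unfold c; assert (0 < b / p) by (apply Rdiv_lt_0_compat; lra); lra).
  assert (Hca : c < a).
  { assert (b / p < a) by (apply Rmult_lt_reg_r with p; lra). unfold c; lra. }
  assert (Hpc : b < p * c).
  { assert (b / p < a) by (apply Rmult_lt_reg_r with p; lra). unfold c. nra. }
  set (q := b / c).
  assert (Hq : q * c = b) by (unfold q; field; lra).
  assert (Hq0 : 0 < q) by (unfold q; apply Rdiv_lt_0_compat; lra).
  assert (Hqp : q < p) by nra.
  set (eta := p - q).
  destruct (phi_chain phi r0 Hr0 HK (f x) eta ltac:(lra) ltac:(unfold eta; lra)) as [rho [Hrho [Hr1 [Hr2 Hch]]]]. fold p in Hch.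
  destruct (fcont_near x rho Hrho) as [df [Hdf Hnear]].
  destruct (slope_ge_elim _ x a Ha HB (Rmin delta df) c ltac:(apply Rmin_glb_lt; lra) ltac:(lra))
    as [y [Hy1 [Hy2 Hy3]]].
  assert (Hm1 : Rmin delta df <= delta) by apply Rmin_l. assert (Hm2 : Rmin delta df <= df) by apply Rmin_r.
  specialize (Hnear y ltac:(lra)).
  assert (Hcd : 0 < c * mdist x y) by nra.
  destruct (Hch (f y) (f x) ltac:(apply Rabs_lt_between; lra) ltac:(rewrite Rminus_diag, Rabs_R0; lra)
       ltac:(lra)) as [Hlo _].
  exists y. split; auto. split; [lra|].
  replace (p - eta) with q in Hlo by (unfold eta; ring).
  nra.
Qed.

Lemma mcont_phicl lo hi : 0 <= lo <= hi -> hi < r0 -> mcontinuous (fun v => phi (cl lo hi (f v))).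
Proof.
  intros Hl Hh v eps He. destruct (phicl_cont phi r0 Hr0 HK lo hi Hl Hh (f v) eps He) as [d1 [Hd1 H1]].
  destruct (Hf v d1 Hd1) as [d [Hd H2]]. exists d. split; auto.
Qed.

Lemma reach_down (Hiii : cond_iii) x rl rh eps : 0 < rl < rh -> rh < r0 -> f x = rh -> 0 < eps ->
  exists z, f z = rl /\ mdist x z <= k * (phi rh - phi rl) + eps.
Proof.
  intros Hrl Hrh Hx He.
  set (lo := rl / 2). set (hi := (rh + r0) / 2).
  assert (Hlh : 0 <= lo <= hi) by (unfold lo, hi; lra). assert (Hhi : hi < r0) by (unfold hi; lra).
  set (D := phi rh - phi rl).
  assert (HD : 0 < D) by (unfold D; pose proof (phi_incr phi r0 Hr0 HK rl rh ltac:(lra) ltac:(lra)); lra).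
  set (K := k + eps / (D + 1)).
  assert (HK0 : k < K) by (unfold K; assert (0 < eps / (D+1)) by (apply Rdiv_lt_0_compat; lra); lra).
  set (b := 1 / K).
  assert (Hb : 0 < b < 1 / k).
  { unfold b. split; [apply Rdiv_lt_0_compat; lra|]. unfold Rdiv. rewrite !Rmult_1_l.
    apply Rinv_lt_contravar; nra. }
  set (g := fun v => phi (cl lo hi (f v))).
  assert (Hgx : g x = phi rh) by (unfold g; rewrite Hx, cl_id; unfold lo, hi; auto; lra).
  destruct (ekeland_level Hcomp g (phi rl) b x) as [z [Hz1 Hz2]].
  - apply mcont_phicl; auto.
  - lra.
  - unfold D in HD; lra.
  - intros z Hz1 Hz2 delta Hd. rewrite Hgx in Hz2. unfold g in Hz1, Hz2.
    pose proof (cl_range lo hi (f z) ltac:(lra)) as Hw.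
    assert (Hw1 : rl < cl lo hi (f z)) by (apply (phi_lt_inv phi r0 Hr0 HK); unfold lo, hi in *; lra).
    assert (Hw2 : cl lo hi (f z) <= rh) by (apply (phi_le_inv phi r0 Hr0 HK); unfold lo, hi in *; lra).
    assert (Hfz : f z = cl lo hi (f z)) by (apply (cl_eq lo hi); auto; unfold lo, hi in *; lra).
    rewrite <- Hfz in Hw1, Hw2.
    destruct (fcont_near z (Rmin (f z - lo) (hi - f z))) as [df [Hdf Hnear]].
    { apply Rmin_glb_lt; unfold lo, hi in *; lra. }
    destruct (desc_phi Hiii z ltac:(split; lra) (Rmin delta df) b ltac:(apply Rmin_glb_lt; lra) Hb)
      as [y [Hy1 [Hy2 Hy3]]].
    assert (Hm1 : Rmin delta df <= delta) by apply Rmin_l. assert (Hm2 : Rmin delta df <= df) by apply Rmin_r.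
    specialize (Hnear y ltac:(lra)).
    assert (Rmin (f z - lo) (hi - f z) <= f z - lo) by apply Rmin_l.
    assert (Rmin (f z - lo) (hi - f z) <= hi - f z) by apply Rmin_r.
    exists y. split; auto. split; [lra|]. unfold g. rewrite <- Hfz. rewrite (cl_id lo hi (f y)) by lra. exact Hy3.
  - exists z. unfold g in Hz1. pose proof (cl_range lo hi (f z) ltac:(lra)).
    assert (cl lo hi (f z) = rl) by (apply (phi_inj phi r0 Hr0 HK); unfold lo, hi in *; auto; lra).
    split. { apply (cl_eq lo hi); auto. unfold lo, hi; lra. }
    rewrite Hgx in Hz2. fold D in Hz2.
    assert (Hbk : b * K = 1) by (unfold b; field; lra).
    assert (mdist x z <= D * K).
    { apply Rmult_le_compat_r with (r := K) in Hz2; [|lra]. replace (b * mdist x z * K) with ((b*K) * mdist x z) in Hz2 by ring. rewrite Hbk, Rmult_1_l in Hz2. lra. }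
    assert (D * (eps / (D + 1)) <= eps).
    { apply Rmult_le_reg_r with (D + 1); [lra|]. replace (D * (eps / (D + 1)) * (D + 1)) with (D * eps) by (field; lra). nra. }
    unfold K in H1. fold D. nra.
Qed.

Lemma reach_up (Hiii : cond_iii) x rl rh eps : 0 < rl < rh -> rh < r0 -> f x = rl -> 0 < eps ->
  exists z, f z = rh /\ mdist x z <= k * (phi rh - phi rl) + eps.
Proof.
  intros Hrl Hrh Hx He.
  set (lo := rl / 2). set (hi := (rh + r0) / 2).
  assert (Hlh : 0 <= lo <= hi) by (unfold lo, hi; lra). assert (Hhi : hi < r0) by (unfold hi; lra).
  set (D := phi rh - phi rl).
  assert (HD : 0 < D) by (unfold D; pose proof (phi_incr phi r0 Hr0 HK rl rh ltac:(lra) ltac:(lra)); lra).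
  set (K := k + eps / (D + 1)).
  assert (HK0 : k < K) by (unfold K; assert (0 < eps / (D+1)) by (apply Rdiv_lt_0_compat; lra); lra).
  set (b := 1 / K).
  assert (Hb : 0 < b < 1 / k).
  { unfold b. split; [apply Rdiv_lt_0_compat; lra|]. unfold Rdiv. rewrite !Rmult_1_l.
    apply Rinv_lt_contravar; nra. }
  set (g := fun v => - phi (cl lo hi (f v))).
  assert (Hgx : g x = - phi rl) by (unfold g; rewrite Hx, cl_id; unfold lo, hi; auto; lra).
  destruct (ekeland_level Hcomp g (- phi rh) b x) as [z [Hz1 Hz2]].
  - apply mcont_opp. apply mcont_phicl; auto.
  - lra.
  - unfold D in HD; lra.
  - intros z Hz1 Hz2 delta Hd. rewrite Hgx in Hz2. unfold g in Hz1, Hz2.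
    pose proof (cl_range lo hi (f z) ltac:(lra)) as Hw.
    assert (Hw1 : cl lo hi (f z) < rh) by (apply (phi_lt_inv phi r0 Hr0 HK); unfold lo, hi in *; lra).
    assert (Hw2 : rl <= cl lo hi (f z)) by (apply (phi_le_inv phi r0 Hr0 HK); unfold lo, hi in *; lra).
    assert (Hfz : f z = cl lo hi (f z)) by (apply (cl_eq lo hi); auto; unfold lo, hi in *; lra).
    rewrite <- Hfz in Hw1, Hw2.
    destruct (fcont_near z (Rmin (f z - lo) (hi - f z))) as [df [Hdf Hnear]].
    { apply Rmin_glb_lt; unfold lo, hi in *; lra. }
    destruct (asc_phi Hiii z ltac:(split; lra) (Rmin delta df) b ltac:(apply Rmin_glb_lt; lra) Hb)
      as [y [Hy1 [Hy2 Hy3]]].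
    assert (Hm1 : Rmin delta df <= delta) by apply Rmin_l. assert (Hm2 : Rmin delta df <= df) by apply Rmin_r.
    specialize (Hnear y ltac:(lra)).
    assert (Rmin (f z - lo) (hi - f z) <= f z - lo) by apply Rmin_l.
    assert (Rmin (f z - lo) (hi - f z) <= hi - f z) by apply Rmin_r.
    exists y. split; auto. split; [lra|]. unfold g. rewrite <- Hfz. rewrite (cl_id lo hi (f y)) by lra. exact Hy3.
  - exists z. unfold g in Hz1. pose proof (cl_range lo hi (f z) ltac:(lra)).
    assert (cl lo hi (f z) = rh) by (apply (phi_inj phi r0 Hr0 HK); unfold lo, hi in *; auto; lra).
    split. { apply (cl_eq lo hi); auto. unfold lo, hi; lra. }
    rewrite Hgx in Hz2. replace (- phi rl - - phi rh) with D in Hz2 by (unfold D; ring).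
    assert (Hbk : b * K = 1) by (unfold b; field; lra).
    assert (mdist x z <= D * K).
    { apply Rmult_le_compat_r with (r := K) in Hz2; [|lra]. replace (b * mdist x z * K) with ((b*K) * mdist x z) in Hz2 by ring. rewrite Hbk, Rmult_1_l in Hz2. lra. }
    assert (D * (eps / (D + 1)) <= eps).
    { apply Rmult_le_reg_r with (D + 1); [lra|]. replace (D * (eps / (D + 1)) * (D + 1)) with (D * eps) by (field; lra). nra. }
    unfold K in H1. fold D. nra.
Qed.

Lemma dist_level (Hiii : cond_iii) x r1 r2 : 0 < r1 < r0 -> 0 < r2 < r0 -> f x = r1 ->
  Rbar_le (dist_set x (level f r2)) (Finite (k * Rabs (phi r1 - phi r2))).
Proof.
  intros H1 H2 Hx. apply dist_le_eps. intros eps He.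
  destruct (Rtotal_order r1 r2) as [h|[h|h]].
  - destruct (reach_up Hiii x r1 r2 eps ltac:(lra) ltac:(lra) Hx He) as [z [Hz Hd]].
    exists z. split; auto. rewrite Rabs_minus_sym, Rabs_right; [lra|].
    pose proof (phi_incr phi r0 Hr0 HK r1 r2 ltac:(lra) ltac:(lra)). lra.
  - subst r2. exists x. split; auto. rewrite d0. pose proof (Rabs_pos (phi r1 - phi r1)). nra.
  - destruct (reach_down Hiii x r2 r1 eps ltac:(lra) ltac:(lra) Hx He) as [z [Hz Hd]].
    exists z. split; auto. rewrite Rabs_right; [lra|].
    pose proof (phi_incr phi r0 Hr0 HK r2 r1 ltac:(lra) ltac:(lra)). lra.
Qed.

Lemma iii_to_ii (Hiii : cond_iii) : forall r1 r2, 0 < r1 < r0 -> 0 < r2 < r0 ->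
      Rbar_le (hausdorff_dist (level f r1) (level f r2))
              (Finite (k * Rabs (phi r1 - phi r2))).
Proof.
  intros r1 r2 H1 H2. apply lub_le. intros t [[x [Hx ->]]|[x [Hx ->]]].
  - apply dist_level; auto.
  - rewrite Rabs_minus_sym. apply dist_level; auto.
Qed.

Lemma ii_to_i : (forall r1 r2, 0 < r1 < r0 -> 0 < r2 < r0 ->
      Rbar_le (hausdorff_dist (level f r1) (level f r2))
              (Finite (k * Rabs (phi r1 - phi r2)))) -> metric_regular_level X f phi r0 L k.
Proof.
  intros Hii xb yb Hxb Hyb HyL Hg. exists 1. split; [lra|]. exists yb. split; auto.
  intros x y Hx _ Hy. apply Rabs_lt_between in Hy. unfold dist_halfline.
  destruct (Rle_dec (phi (f x)) y) as [h|h].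
  - rewrite Rmax_left by lra. eapply Rbar_le_trans. apply (dist_le_pt x _ x). split; auto.
    rewrite d0. simpl. lra.
  - destruct Hx as [Hx1 Hx2].
    destruct (phi_ivt phi r0 Hr0 HK (f x) y ltac:(lra) ltac:(lra)) as [r [Hr Hphi]].
    rewrite Rmax_right by lra.
    eapply Rbar_le_trans. apply (dist_mono x (level f r)).
    { intros z Hz. unfold level in Hz. split; [unfold band; lra|]. rewrite Hz; lra. }
    apply Rbar_le_trans with (hausdorff_dist (level f (f x)) (level f r)).
    { unfold hausdorff_dist. apply lub_ub. left. exists x. split; reflexivity. }
    eapply Rbar_le_trans. apply (Hii (f x) r); lra.
    simpl. rewrite Hphi, Rabs_right by lra. lra.
Qed.

End Main.

Theorem corollary2p7 (X : MetricSpace) (f : X -> R) (r0 k : R) (phi : R -> R) (L : Rbar) :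
  complete_metric X ->
  mcontinuous f ->
  0 < r0 -> 0 < k ->
  strongly_slope_regular f (band f r0) ->
  inK phi r0 ->
  (* L = phi(r0) := lim_{r -> r0^-} phi r *)
  filterlim phi (at_left r0) (Rbar_locally L) ->
  let cond_i := metric_regular_level X f phi r0 L k in
  let cond_ii := forall r1 r2, 0 < r1 < r0 -> 0 < r2 < r0 ->
      Rbar_le (hausdorff_dist (level f r1) (level f r2))
              (Finite (k * Rabs (phi r1 - phi r2))) in
  let cond_iii := forall x, band f r0 x ->
      Rbar_le (Finite (1 / k)) (slope (fun z => phi (f z)) x) in
  (cond_i <-> cond_ii) /\ (cond_ii <-> cond_iii).
Proof.
  intros Hc Hf Hr0 Hk Hreg HK HL ci cii ciii.
  pose proof (i_to_iii X f r0 k phi L Hr0 Hk HK HL) as I3.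
  pose proof (iii_to_ii X f r0 k phi Hc Hf Hr0 Hk Hreg HK) as I2.
  pose proof (ii_to_i X f r0 k phi L Hr0 HK) as I1.
  unfold ci, cii, ciii. split; split; intros H.
  - apply I2. apply I3. exact H.
  - apply I1. exact H.
  - apply I3. apply I1. exact H.
  - apply I2. exact H.
Qed.
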